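(* Let $\mathbb{A}_1\subseteq\cdots\subseteq\mathbb{A}_k$ be a flag of linear subspaces of $\mathbb{R}^n$ and $b\in\mathbb{R}^n$. Then $s_b\bigl(\Omega(\mathbb{A}_1,\dots,\mathbb{A}_k)\bigr)=\{\mathbb{B}+b:\mathbb{B}\in\Omega(\mathbb{A}_1,\dots,\mathbb{A}_k)\}$ is a strong deformation retract of $\Psi(\mathbb{A}_1+b,\dots,\mathbb{A}_k+b)$. In particular, $\Psi(\mathbb{A}_1+b,\dots,\mathbb{A}_k+b)$ is homotopy equivalent to $\tau^{-1}\bigl(\Omega(\mathbb{A}_1,\dots,\mathbb{A}_k)\bigr)$.
   Context: $\mathrm{Graff}(k,n)$ is the manifold of $k$-dimensional affine subspaces of $\mathbb{R}^n$, $\tau:\mathrm{Graff}(k,n)\to\mathrm{Gr}(k,n)$, $\mathbb{A}+c\mapsto\mathbb{A}$, and subsets carry the subspace topology. $\Omega(\mathbb{A}_1,\dots,\mathbb{A}_k)=\{\mathbb{B}\in\mathrm{Gr}(k,n):\dim(\mathbb{B}\cap\mathbb{A}_j)\ge j,\ j=1,\dots,k\}$; $\Psi(\mathbb{A}_1+b,\dots,\mathbb{A}_k+b)=\{\mathbb{B}+c\in\mathrm{Graff}(k,n):\dim((\mathbb{B}+c)\cap(\mathbb{A}_j+b))\ge j,\ j=1,\dots,k\}$; $s_b(\mathbb{B})=\mathbb{B}+b$. *)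

(* Defs.v *)
From HB Require Import structures.
From mathcomp Require Import all_boot all_order all_algebra.
From mathcomp Require Import all_classical all_reals all_analysis.
Set Implicit Arguments. Unset Strict Implicit. Unset Printing Implicit Defensive.
Import Order.TTheory GRing.Theory Num.Theory.
Import numFieldNormedType.Exports.
Local Open Scope classical_set_scope.
Local Open Scope ring_scope.

Section Defs.
Variables (R : realType) (n : nat).

Notation vec := 'rV[R]_n.

Definition aff (U : {vspace vec}) (c : vec) : set vec :=
  [set x | x - c \in U].

(** An affine set S has dimension >= j: S is nonempty (empty set has
    dimension -1) and its direction space has dimension >= j. *)
Definition affdim_ge (S : set vec) (j : nat) : Prop :=
  exists (U : {vspace vec}) (c : vec), S = aff U c /\ (j <= \dim U)%N.

(** Orthogonal projector onto U: symmetric idempotent matrix with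
    fixed space U (chosen by classical choice; it exists and is unique). *)
Definition is_orthproj (U : {vspace vec}) (P : 'M[R]_n) : Prop :=
  P^T = P /\ P *m P = P /\ (forall x : vec, (x \in U) = (x *m P == x)).

Definition orthproj (U : {vspace vec}) : 'M[R]_n := xget 0 (is_orthproj U).

(** Ambient space in which Graff(k,n) is (homeomorphically) embedded:
    an affine subspace U + c is sent to (P_U, c - c P_U), i.e. the pair
    (orthogonal projector onto its direction, its point closest to 0).
    This is the standard topology of Graff(k,n), and its restriction to
    the first component is the standard topology of Gr(k,n). *)
Definition amb := ('M[R]_n * 'rV[R]_n)%type.

Definition gemb (U : {vspace vec}) (c : vec) : amb :=
  (orthproj U, c - c *m orthproj U).

Definition graff_subset (k : nat) (Q : set vec -> Prop) : set amb :=
  [set e | exists (U : {vspace vec}) (c : vec),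
       \dim U = k /\ Q (aff U c) /\ e = gemb U c].

Definition Omega (k : nat) (A : nat -> {vspace vec}) (B : {vspace vec}) : Prop :=
  \dim B = k /\ (forall j, (1 <= j <= k)%N -> (j <= \dim (B :&: A j)%VS)%N).

Definition Psi (k : nat) (A : nat -> {vspace vec}) (b : vec) : set amb :=
  graff_subset k (fun S => forall j, (1 <= j <= k)%N ->
                              affdim_ge (S `&` aff (A j) b) j).

Definition sbOmega (k : nat) (A : nat -> {vspace vec}) (b : vec) : set amb :=
  graff_subset k (fun S => exists B, Omega k A B /\ S = aff B b).

Definition tauinvOmega (k : nat) (A : nat -> {vspace vec}) : set amb :=
  graff_subset k (fun S => exists B c, Omega k A B /\ S = aff B c).

End Defs.

Section Topo.
Variables (R : realType) (T : topologicalType).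

Definition unit_int : set R := `[0%R, 1%R]%classic.

Definition strong_deformation_retract (X Y : set T) : Prop :=
  X `<=` Y /\
  exists H : R * T -> T,
    {within unit_int `*` Y, continuous H} /\
    (forall t y, unit_int t -> Y y -> Y (H (t, y))) /\
    (forall y, Y y -> H (0%R, y) = y) /\
    (forall y, Y y -> X (H (1%R, y))) /\
    (forall t x, unit_int t -> X x -> H (t, x) = x).

Definition homotopic_on (X : set T) (f g : T -> T) : Prop :=
  exists H : R * T -> T,
    {within unit_int `*` X, continuous H} /\
    (forall t x, unit_int t -> X x -> X (H (t, x))) /\
    (forall x, X x -> H (0%R, x) = f x) /\
    (forall x, X x -> H (1%R, x) = g x).

Definition homotopy_equivalent (X Y : set T) : Prop :=
  exists f g : T -> T,
    {within X, continuous f} /\ {within Y, continuous g} /\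
    f @` X `<=` Y /\ g @` Y `<=` X /\
    homotopic_on X (g \o f) idfun /\ homotopic_on Y (f \o g) idfun.

End Topo.

(* Main.v *)
Require Import Defs.
From HB Require Import structures.
From mathcomp Require Import all_boot all_order all_algebra.
From mathcomp Require Import all_classical all_reals all_analysis.
Import Order.TTheory GRing.Theory Num.Theory.
Import numFieldNormedType.Exports.
Local Open Scope classical_set_scope.
Local Open Scope ring_scope.

Section Orth.
Variables (R : realType) (n : nat).
Notation vec := 'rV[R]_n.

Lemma mxtr_eq0 p (Y : 'M[R]_(p, n)) : Y *m Y^T = 0 -> Y = 0.
Proof.
move=> h; apply/matrixP => i j.
have := congr1 (fun Z : 'M[R]_p => Z i i) h; rewrite !mxE => /psumr_eq0P H.
have {}H := H (fun k _ => ltac:(rewrite !mxE; rewrite -expr2; exact: sqr_ge0)).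
by have := H j isT; rewrite !mxE => /eqP; rewrite mulf_eq0 orbb => /eqP ->.
Qed.

Lemma span_mx (U : {vspace vec}) :
  exists r (M : 'M[R]_(r, n)), row_free M /\ forall x : vec, (x \in U) = (x <= M)%MS.
Proof.
pose X := vbasis U.
pose M : 'M[R]_(\dim U, n) := \matrix_(i < \dim U) X`_i.
exists (\rank M), (row_base M); split; first exact: row_base_free.
move=> x; rewrite (eq_row_base M); apply/idP/idP.
  move=> /coord_vbasis ->; apply/submxP.
  exists (\row_i coord X i x); rewrite mulmx_sum_row.
  by apply: eq_bigr => i _; rewrite rowK mxE.
move=> /submxP [y ->]; rewrite mulmx_sum_row.
apply: memv_suml => i _; apply: memvZ; rewrite rowK.
by apply: vbasis_mem; apply: mem_nth; rewrite size_tuple.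
Qed.

Lemma orthproj_ex (U : {vspace vec}) : exists P, is_orthproj U P.
Proof.
have [r [M [fM hM]]] := span_mx U.
pose G := M *m M^T.
have uG : G \in unitmx.
  rewrite -row_free_unit -kermx_eq0; apply/eqP.
  have hK : (kermx G *m M) *m (kermx G *m M)^T = 0.
    by rewrite trmx_mul mulmxA -(mulmxA _ M) mulmx_ker mul0mx.
  by have /eqP := @mxtr_eq0 _ _ hK; rewrite mulmx_free_eq0 // => /eqP.
have GT : G^T = G by rewrite /G trmx_mul trmxK.
exists (M^T *m invmx G *m M); split; [|split].
- by rewrite !trmx_mul trmxK trmx_inv GT mulmxA.
- rewrite -!mulmxA (mulmxA M) -/G (mulmxA (invmx G)) mulVmx // mul1mx.
  by [].
move=> x; rewrite hM; apply/idP/idP.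
  move=> /submxP [y ->]; apply/eqP.
  by rewrite -!mulmxA (mulmxA M) -/G (mulmxA G) mulmxV // mul1mx.
move=> /eqP <-; by rewrite mulmxA submxMl.
Qed.

Lemma orthprojP (U : {vspace vec}) : is_orthproj U (orthproj U).
Proof. by apply: xgetPex; exact: orthproj_ex. Qed.

Lemma orthproj_id (U : {vspace vec}) x : x \in U -> x *m orthproj U = x.
Proof. by have [_ [_ h]] := orthprojP U; rewrite h => /eqP. Qed.

End Orth.

Lemma mx_cont_entries (R : realType) (T : topologicalType) m n (f : T -> 'M[R]_(m,n)) :
  (forall i j, continuous (fun x => f x i j)) -> continuous f.
Proof.
move=> h x A /nbhs_ballP [e e0 eA].
have : \forall y \near x, forall i j, ball (f x i j) e (f y i j).
  apply: filter_forall => i; apply: filter_forall => j.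
  by apply: (h i j x); exact: nbhsx_ballx.
by apply: filterS => y hy; apply: eA; split.
Qed.

Lemma cont_sum (R : realType) (T : topologicalType) (I : Type) (r : seq I)
  (F : I -> T -> R^o) : (forall i, continuous (F i)) ->
  continuous (fun x => \sum_(i <- r) F i x).
Proof.
move=> h; elim: r => [|i r IH].
  under eq_fun do rewrite big_nil. exact: cst_continuous.
under eq_fun do rewrite big_cons.
move=> x; apply: continuousD; [exact: h| exact: IH].
Qed.

Lemma mulmx_cont (R : realType) n (b : 'rV[R]_n) :
  continuous (fun P : 'M[R]_n => b *m P).
Proof.
apply: mx_cont_entries => i j.
under eq_fun do rewrite mxE.
apply: cont_sum => k.
move=> x; apply: continuousM; first exact: cst_continuous.
exact: coord_continuous.
Qed.

Lemma fst_cont (T U : topologicalType) : continuous (@fst T U).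
Proof. by move=> z; exact: cvg_fst. Qed.
Lemma snd_cont (T U : topologicalType) : continuous (@snd T U).
Proof. by move=> z; exact: cvg_snd. Qed.

Definition Hh (R : realType) n (b : 'rV[R]_n) (z : R * ('M[R]_n * 'rV[R]_n)) :
   'M[R]_n * 'rV[R]_n :=
  (z.2.1, (1 - z.1) *: z.2.2 + z.1 *: (b - b *m z.2.1)).

Arguments Hh {R n}.
Lemma Hh_cont (R : realType) n (b : 'rV[R]_n) : continuous (Hh b).
Proof.
move=> z; rewrite /Hh.
have c1 : {for z, continuous (fun z : R * ('M[R]_n * 'rV[R]_n) => z.2.1)}.
  apply: (@continuous_comp _ _ _ snd fst); [exact: snd_cont| exact: fst_cont].
have c2 : {for z, continuous (fun z : R * ('M[R]_n * 'rV[R]_n) => z.2.2)}.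
  apply: (@continuous_comp _ _ _ snd snd); [exact: snd_cont| exact: snd_cont].
have c0 : {for z, continuous (fun z : R * ('M[R]_n * 'rV[R]_n) => z.1)}.
  exact: fst_cont.
have c3 : {for z, continuous (fun z : R * ('M[R]_n * 'rV[R]_n) => 1 - z.1)}.
  apply: (@continuousB _ R^o); [exact: cst_continuous | exact: c0].
have c4 : {for z, continuous (fun z : R * ('M[R]_n * 'rV[R]_n) => b - b *m z.2.1)}.
  apply: (@continuousB _ 'rV[R]_n); first exact: cst_continuous.
  apply: (@continuous_comp _ _ _ (fun z => z.2.1) (fun P => b *m P)); first exact: c1.
  exact: mulmx_cont.
have c5 := @continuousZ _ 'rV[R]_n _ _ _ _ c3 c2.
have c6 := @continuousZ _ 'rV[R]_n _ _ _ _ c0 c4.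
have c7 := @continuousD _ 'rV[R]_n _ _ _ _ c5 c6.
apply: (@cvg_pair _ _ _ (nbhs z) (nbhs (z.2.1)) (nbhs ((1 - z.1) *: z.2.2 + z.1 *: (b - b *m z.2.1)))).
- exact: c1.
- exact: c7.
Qed.

Section Main.
Local Set Implicit Arguments.
Variables (R : realType) (n : nat).
Notation vec := 'rV[R]_n.
Implicit Types (U A W B : {vspace vec}) (c b d : vec).

Lemma aff_cap_info U A W c b d :
  aff U c `&` aff A b = aff W d ->
  [/\ d - c \in U, d - b \in A & forall y, (y \in W) = (y \in U) && (y \in A)].
Proof.
move=> E.
have hd : (aff U c `&` aff A b) d by rewrite E /aff /= subrr mem0v.
case: hd; rewrite /aff /= => hdc hdb; split => // y.
apply/idP/andP.
- move=> yW; have : (aff U c `&` aff A b) (d + y).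
    by rewrite E /aff /= addrAC subrr add0r.
  case; rewrite /aff /= => h1 h2; split.
  + by have := memvB h1 hdc; rewrite opprB addrA subrK addrAC subrr add0r.
  + by have := memvB h2 hdb; rewrite opprB addrA subrK addrAC subrr add0r.
- case=> yU yA; have : (aff U c `&` aff A b) (d + y).
    by split; rewrite /aff /= addrAC; apply: memvD.
  by rewrite E /aff /= addrAC subrr add0r.
Qed.

Lemma aff_move U A W c b d c' d' :
  aff U c `&` aff A b = aff W d -> d' - c' \in U -> d' - b \in A ->
  aff U c' `&` aff A b = aff W d'.
Proof.
move=> E h1 h2; have [_ _ hW] := aff_cap_info E.
apply/seteqP; split => x /=.
- case; rewrite /aff /= => x1 x2; rewrite hW; apply/andP; split.
  + by have := memvB x1 h1; rewrite opprB addrA subrK.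
  + by have := memvB x2 h2; rewrite opprB addrA subrK.
- rewrite /aff /= hW => /andP [x1 x2]; split; rewrite /aff /=.
  + by have := memvD x1 h1; rewrite addrA subrK.
  + by have := memvD x2 h2; rewrite addrA subrK.
Qed.

Lemma convex_sub2 (x y z : vec) (t : R) :
  ((1 - t) *: x + t *: z) - ((1 - t) *: y + t *: z) = (1 - t) *: (x - y).
Proof. by rewrite opprD addrACA subrr addr0 scalerBr. Qed.

Lemma convex_sub (x y : vec) (t : R) :
  ((1 - t) *: x + t *: y) - y = (1 - t) *: (x - y).
Proof.
rewrite -(convex_sub2 x y y); congr (_ - _).
by rewrite -scalerDl subrK scale1r.
Qed.

Lemma affdim_move U A c b (j : nat) (t : R) :
  affdim_ge (aff U c `&` aff A b) j ->
  affdim_ge (aff U ((1 - t) *: c + t *: b) `&` aff A b) j.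
Proof.
case=> W [d [E hj]]; exists W, ((1 - t) *: d + t *: b); split => //.
have [hdc hdb _] := aff_cap_info E.
apply: aff_move E _ _.
- by rewrite convex_sub2; apply: memvZ.
- by rewrite convex_sub; apply: memvZ.
Qed.

Lemma affdim_dim U A c b (j : nat) :
  affdim_ge (aff U c `&` aff A b) j -> (j <= \dim (U :&: A))%N.
Proof.
case=> W [d [E hj]]; apply: leq_trans hj _; apply: dimvS.
have [_ _ hW] := aff_cap_info E.
by apply/subvP => y; rewrite memv_cap hW.
Qed.

Lemma affdim_omega U A b (j : nat) :
  (j <= \dim (U :&: A))%N -> affdim_ge (aff U b `&` aff A b) j.
Proof.
move=> hj; exists (U :&: A)%VS, b; split => //.
apply/seteqP; split => x; rewrite /aff /= ?memv_cap.
  by case => h1 h2; apply/andP.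
by move/andP.
Qed.

Lemma aff_eq_vs U B c d : aff U c = aff B d -> U = B.
Proof.
move=> E.
have hc : aff B d c by rewrite -E /aff /= subrr mem0v.
have hd : aff U c d by rewrite E /aff /= subrr mem0v.
move: hc hd; rewrite /aff /= => hc hd.
apply/vspaceP => x; apply/idP/idP => hx.
- have : aff U c (x + c) by rewrite /aff /= addrK.
  rewrite E /aff /= => h; have := memvB h hc.
  by rewrite opprB addrA subrK addrK.
- have : aff B d (x + d) by rewrite /aff /= addrK.
  rewrite -E /aff /= => h; have := memvB h hd.
  by rewrite opprB addrA subrK addrK.
Qed.

Lemma gemb_eq U c c' : c' - c \in U -> gemb U c' = gemb U c.
Proof.
move=> h; rewrite /gemb; congr pair.
have -> : c' = c + (c' - c) by rewrite addrC subrK.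
by rewrite mulmxDl (@orthproj_id R n U _ h) opprD addrACA subrr addr0.
Qed.

Lemma gemb_H b U c (t : R) :
  Hh b (t, gemb U c) = gemb U ((1 - t) *: c + t *: b).
Proof.
by rewrite /Hh /gemb /=; congr pair; rewrite mulmxDl -!scalemxAl !scalerBr opprD addrACA.
Qed.

End Main.

Theorem theorem7p6 (R : realType) (n k : nat)
    (A : nat -> {vspace 'rV[R]_n}) (b : 'rV[R]_n) :
  (forall j, (1 <= j < k)%N -> (A j <= A j.+1)%VS) ->
  strong_deformation_retract R (sbOmega k A b) (Psi k A b) /\
  homotopy_equivalent R (Psi k A b) (tauinvOmega k A).
Proof.
move=> _.
pose H := Hh b.
have Hc : continuous H := @Hh_cont R n b.
have Hg : forall t U c, H (t, gemb U c) = gemb U ((1 - t) *: c + t *: b).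
  by move=> t U c; exact: gemb_H.
have PsiH : forall t y, Psi k A b y -> Psi k A b (H (t, y)).
  move=> t y [U [c [dU [hQ ->]]]]; rewrite Hg.
  exists U, ((1 - t) *: c + t *: b); split => //; split => // j hj.
  exact: affdim_move (hQ j hj).
have Psi_om : forall U c, \dim U = k ->
    (forall j, (1 <= j <= k)%N -> affdim_ge (aff U c `&` aff (A j) b) j) ->
    Omega k A U.
  by move=> U c dU hQ; split => // j hj; exact: affdim_dim (hQ j hj).
have om_Psi : forall U, Omega k A U -> Psi k A b (gemb U b).
  move=> U [dU hU]; exists U, b; split => //; split => // j hj.
  exact: affdim_omega (hU j hj).
have H1b : forall U c, H (1, gemb U c) = gemb U b.
  by move=> U c; rewrite Hg subrr scale0r add0r scale1r.
have H0 : forall y, H (0, y) = y.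
  by case=> P v; rewrite /H /Hh /= subr0 scale1r scale0r addr0.
have tauH : forall t y, tauinvOmega k A y -> tauinvOmega k A (H (t, y)).
  move=> t y [U [c [dU [[B [c0 [oB E]]] ->]]]]; rewrite Hg.
  have UB := aff_eq_vs E; subst B.
  exists U, ((1 - t) *: c + t *: b); split => //; split => //.
  by exists U, ((1 - t) *: c + t *: b).
have cH' : continuous (fun z : R * ('M[R]_n * 'rV[R]_n) => H (1 - z.1, z.2)).
  move=> z.
  apply: (@continuous_comp _ _ _ (fun z : R * ('M[R]_n * 'rV[R]_n) => (1 - z.1, z.2)) H); last exact: Hc.
  have c0 : {for z, continuous (fun z : R * ('M[R]_n * 'rV[R]_n) => z.1)}.
    exact: fst_cont.
  have c3 : {for z, continuous (fun z : R * ('M[R]_n * 'rV[R]_n) => 1 - z.1)}.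
    apply: (@continuousB _ R^o); [exact: cst_continuous | exact: c0].
  apply: (@cvg_pair _ _ _ (nbhs z) (nbhs (1 - z.1)) (nbhs z.2)).
  - exact: c3.
  - exact: snd_cont.
have cg : continuous (fun y : 'M[R]_n * 'rV[R]_n => H (1, y)).
  move=> y.
  apply: (@continuous_comp _ _ _ (fun y : 'M[R]_n * 'rV[R]_n => (1 : R, y)) H); last exact: Hc.
  apply: (@cvg_pair _ _ _ (nbhs y) (nbhs (1 : R)) (nbhs y)).
  - exact: cvg_cst.
  - exact: cvg_id.
split.
  split.
    move=> x [U [c [dU [[B [oB E]] ->]]]].
    exists U, c; split => //; split => // j hj; rewrite E.
    exact: affdim_omega (oB.2 j hj).
  exists H; split; first exact: continuous_subspaceT.
  split; first by move=> t y _; exact: PsiH.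
  split; first by move=> y _; exact: H0.
  split.
    move=> y [U [c [dU [hQ ->]]]]; rewrite H1b.
    exists U, b; split => //; split => //.
    by exists U; split => //; exact: Psi_om hQ.
  move=> t x _ [U [c [dU [[B [oB E]] ->]]]].
  have UB := aff_eq_vs E; subst B.
  have hcb : c - b \in U.
    have : aff U c b by rewrite E /aff /= subrr mem0v.
    by rewrite /aff /= => h; rewrite -opprB memvN.
  rewrite Hg; rewrite (gemb_eq (c := b)); first by rewrite (gemb_eq hcb).
  by rewrite convex_sub; apply: memvZ.
exists id, (fun y => H (1, y)).
split; first by apply: continuous_subspaceT => y; exact: cvg_id.
split; first exact: continuous_subspaceT.
split.
  move=> _ [y [U [c [dU [hQ ->]]]] <-].
  exists U, c; split => //; split => //.
  by exists U, c; split => //; exact: Psi_om hQ.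
split.
  move=> _ [y [U [c [dU [[B [c0 [oB E]]] ->]]]] <-].
  have UB := aff_eq_vs E; subst B.
  by rewrite H1b; exact: om_Psi.
split.
  exists (fun z => H (1 - z.1, z.2)); split; first exact: continuous_subspaceT.
  split; first by move=> t y _ hy; exact: PsiH.
  split; first by move=> x _ /=; rewrite subr0.
  by move=> x _ /=; rewrite subrr H0.
exists (fun z => H (1 - z.1, z.2)); split; first exact: continuous_subspaceT.
split; first by move=> t y _ hy; exact: tauH.
split; first by move=> x _ /=; rewrite subr0.
by move=> x _ /=; rewrite subrr H0.
Qed.
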